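(* For every trie $\mathcal T$ with $n$ nodes and every integer $k\ge0$, $n\mathcal H_k(\mathcal T)\le (n-1)\mathcal H^{label}_k(\mathcal T)+1.443n$.
   Context: A trie over a finite totally ordered alphabet $\Sigma$ is a rooted ordered tree with edges labeled by symbols of $\Sigma$ such that edges leaving the same node have distinct labels and siblings are ordered by their incoming labels. For node $u$: $out(u)$ is the set of labels of edges leaving $u$; $\lambda(u)$ is the label of the edge entering $u$, with $\lambda(\text{root})=\#\notin\Sigma$; $\pi(u)$ is the parent, $\pi(\text{root})=\text{root}$; $\lambda_0(u)=\epsilon$, $\lambda_k(u)=\lambda_{k-1}(\pi(u))\cdot\lambda(u)$. For a length-$k$ string $w$ and $c\in\Sigma$: $n_w=|\{u:\lambda_k(u)=w\}|$, $n_{w,c}=|\{u:\lambda_k(u)=w,\ c\in out(u)\}|$. Logs base 2, $0\log(x/0)=0$. $\mathcal H_k(\mathcal T)=\sum_{w}\sum_{c\in\Sigma}\left[\frac{n_{w,c}}{n}\log\frac{n_w}{n_{w,c}}+\frac{n_w-n_{w,c}}{n}\log\frac{n_w}{n_w-n_{w,c}}\right]$ over contexts $w$ with $n_w>0$. For a string $X$ of length $\ell>0$ with $\ell_c$ occurrences of $c$, $\mathcal H_0(X)=\sum_c\frac{\ell_c}{\ell}\log\frac{\ell}{\ell_c}$ (and $0$ for the empty string). For a length-$k$ context $w$, $cover(w)$ is the string obtained by concatenating (in any order) the labels of all edges leaving nodes $u$ with $\lambda_k(u)=w$. The label entropy is defined by $(n-1)\mathcal H^{label}_k(\mathcal T)=\sum_w|cover(w)|\,\mathcal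 H_0(cover(w))$. *)

(* Defs.v *)
From HB Require Import structures.
From mathcomp Require Import all_boot all_order all_algebra.
From mathcomp Require Import reals exp.
Set Implicit Arguments. Unset Strict Implicit. Unset Printing Implicit Defensive.
Import Order.TTheory GRing.Theory Num.Theory.
Local Open Scope ring_scope.

(* A trie over the finite alphabet Sigma is represented by its set of nodes,
   each node being identified with the string of edge labels on the path from
   the root to it.  Children of u are the nodes rcons u c; distinct outgoing edges
   automatically have distinct labels; sibling order plays no role below. *)
Record trie (Sigma : finType) := Trie {
  nodes : seq (seq Sigma);
  nodes_uniq : uniq nodes;
  root_in : [::] \in nodes;
  parent_in : forall (s : seq Sigma) (c : Sigma), rcons s c \in nodes -> s \in nodes
}.

Section TrieEntropy.
Variables (R : realType) (Sigma : finType).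

Definition log2 (x : R) : R := ln x / ln 2.

(* a * log2 (b / a), with the convention 0 * log(x/0) = 0 *)
Definition xlogb (a b : nat) : R :=
  if a == 0%N then 0 else a%:R * log2 (b%:R / a%:R).

Definition out_has (T : trie Sigma) (u : seq Sigma) (c : Sigma) : bool :=
  rcons u c \in nodes T.

(* lambda_k(u) over the extended alphabet option Sigma, None playing the role
   of #: the last k labels of the root path, left-padded with # when the depth
   of u is smaller than k (lambda(root) = #, pi(root) = root). *)
Definition ctx (k : nat) (u : seq Sigma) : seq (option Sigma) :=
  let d := size u in
  if (k <= d)%N then map Some (drop (d - k) u)
  else nseq (k - d) None ++ map Some u.

Definition n_w (T : trie Sigma) k (w : seq (option Sigma)) : nat :=
  count (fun u => ctx k u == w) (nodes T).

Definition n_wc (T : trie Sigma) k (w : seq (option Sigma)) (c : Sigma) : nat :=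
  count (fun u => (ctx k u == w) && out_has T u c) (nodes T).

Definition contexts (T : trie Sigma) k : seq (seq (option Sigma)) :=
  undup (map (ctx k) (nodes T)).

Definition Hk (T : trie Sigma) (k : nat) : R :=
  let n := size (nodes T) in
  \sum_(w <- contexts T k) \sum_(c : Sigma)
     (xlogb (n_wc T k w c) (n_w T k w) / n%:R
      + xlogb (n_w T k w - n_wc T k w c) (n_w T k w) / n%:R).

Definition H0 (X : seq Sigma) : R :=
  if size X == 0%N then 0
  else \sum_(c : Sigma) xlogb (count_mem c X) (size X) / (size X)%:R.

Definition cover (T : trie Sigma) k (w : seq (option Sigma)) : seq Sigma :=
  flatten [seq [seq c <- enum Sigma | out_has T u c] | u <- nodes T & ctx k u == w].

Definition Hlabel (T : trie Sigma) (k : nat) : R :=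
  (\sum_(w <- contexts T k) (size (cover T k w))%:R * H0 (cover T k w))
  / ((size (nodes T)).-1)%:R.

End TrieEntropy.

(* Main.v *)
From HB Require Import structures.
From mathcomp Require Import all_boot all_order all_algebra.
From mathcomp Require Import all_classical all_reals all_analysis.
From mathcomp Require Import ring lra.
Require Import Defs.
Import Order.TTheory GRing.Theory Num.Theory.
Import numFieldNormedType.Exports.
Local Open Scope ring_scope.


Local Open Scope classical_set_scope.
Lemma pade (R : realType) (y : R) : 0 <= y <= 1 -> expR y * (2 - y) <= 2 + y.
Proof.
move=> /andP[y0 y1].
pose g : R -> R := (cst 2 + id) - (@expR R) * (cst 2 - id).
have dg (x : R) : is_derive x 1 g ((0 + 1) - (expR x *: (0 - 1) + (2 - x) *: expR x)).
  by rewrite /g; apply: is_deriveB; apply: is_deriveM.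
have der x : derivable g x 1 by have := dg x; case.
have g'E x : g^`() x = (0 + 1) - (expR x *: (0 - 1) + (2 - x) *: expR x).
  by rewrite derive1E; apply: derive_val.
have H : g 0 <= g y.
  apply: (@ger0_derive1_ndecr R g 0 1 (fun x _ => der x)) => //.
  - move=> x; rewrite in_itv /= => /andP[x0 x1].
    rewrite g'E /GRing.scale /=.
    have h : expR x * expR (- x) = 1 by rewrite expRxMexpNx_1.
    have h2 : 1 - x <= expR (- x) by have := expR_ge1Dx (- x); lra.
    have ex0 := expR_gt0 x.
    nra.
  - by apply: derivable_within_continuous => x _; exact: der.
have gE z : g z = 2 + z - expR z * (2 - z) by []. move: H; rewrite !gE expR0; lra.
Qed.

Local Close Scope classical_set_scope.
Lemma ln2_ge (R : realType) : 1000%:R / 1443%:R <= ln (2 : R).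
Proof.
set y : R := 1 / 101%:R.
have y01 : 0 <= y <= 1 by apply/andP; split; rewrite /y; lra.
have hp := @pade R y y01.
have ey : expR y <= (2 + y) / (2 - y).
  rewrite ler_pdivlMr; last by rewrite /y; lra.
  exact: hp.
have e70 : expR (70%:R * y) <= 2.
  rewrite expRM_natl.
  apply: (le_trans (y := ((2 + y) / (2 - y)) ^+ 70)).
    rewrite lerXn2r // ?nnegrE ?expR_ge0 //.
    by apply: divr_ge0; rewrite /y; lra.
  have -> : (2 + y) / (2 - y) = 203%:R / 201%:R by rewrite /y; field.
  lra.
have : ln (expR (70%:R * y)) <= ln 2.
  by rewrite ler_ln // ?posrE ?expR_gt0.
rewrite expRK /y; lra.
Qed.
Section PerCtx.
Variable R : realType.
Let L : R := ln 2.
Lemma L_gt0 : 0 < L. Proof. by rewrite /L ln_gt0 // ltr1n. Qed.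

Lemma T1E (a N m : nat) : (a <= N)%N -> (a <= m)%N ->
  xlogb R a N - xlogb R a m = a%:R * (ln (N%:R / m%:R) / L).
Proof.
move=> aN am; rewrite /xlogb /log2; case: eqP => [->|/eqP a0]; first by rewrite mul0r subr0.
have a0' : (0 < a)%N by rewrite lt0n.
have ar : (0 : R) < a%:R by rewrite ltr0n.
have Nr : (0 : R) < N%:R by rewrite ltr0n (leq_trans a0').
have mr : (0 : R) < m%:R by rewrite ltr0n (leq_trans a0').
rewrite -mulrBr -mulrBl -/L; congr (_ * (_ / _)).
rewrite !ln_div ?posrE //; ring.
Qed.

Lemma T2le (a N : nat) : (a <= N)%N -> xlogb R (N - a) N <= a%:R / L.
Proof.
move=> aN; rewrite /xlogb /log2 -/L; case: eqP => [_|/eqP d0].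
  by rewrite divr_ge0 ?ler0n // ltW // L_gt0.
have d0' : (0 < N - a)%N by rewrite lt0n.
have dr : (0 : R) < (N - a)%:R by rewrite ltr0n.
rewrite mulrA ler_pM2r ?invr_gt0 ?L_gt0 //.
have h := @le_ln1Dx R (N%:R / (N - a)%:R - 1).
have : ln (N%:R / (N - a)%:R : R) <= N%:R / (N - a)%:R - 1.
  have e : 1 + (N%:R / (N - a)%:R - 1) = N%:R / (N - a)%:R :> R by ring.
  rewrite -{1}e; apply: h.
  have : 0 < N%:R / (N - a)%:R :> R.
    by rewrite divr_gt0 // ltr0n (leq_trans d0') ?leq_subr.
  lra.
move=> hl.
have := ler_wpM2l (ltW dr) hl.
rewrite mulrBr mulr1 mulrCA divff ?mulr1; last by rewrite gt_eqF.
rewrite natrB //.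
move=> H; apply: (le_trans H); lra.
Qed.

Lemma lnle (N m : nat) : (0 < m)%N -> (0 < N)%N ->
  m%:R * ln (N%:R / m%:R : R) + m%:R <= N%:R.
Proof.
move=> m0 N0.
have mr : (0 : R) < m%:R by rewrite ltr0n.
have Nr : (0 : R) < N%:R by rewrite ltr0n.
have X0 : 0 < N%:R / m%:R :> R by rewrite divr_gt0.
have e : 1 + (N%:R / m%:R - 1) = N%:R / m%:R :> R by ring.
have hl : ln (N%:R / m%:R : R) <= N%:R / m%:R - 1.
  by rewrite -{1}e; apply: le_ln1Dx; lra.
have := ler_wpM2l (ltW mr) hl.
rewrite mulrBr mulr1 mulrCA divff ?mulr1; last by rewrite gt_eqF.
lra.
Qed.

Lemma per_ctx (I : finType) (a : I -> nat) (N : nat) : (forall c, a c <= N)%N ->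
  \sum_c (xlogb R (a c) N + xlogb R (N - a c) N)
  <= \sum_c xlogb R (a c) (\sum_c a c) + N%:R / L.
Proof.
move=> aN; set m := (\sum_c a c)%N.
have am c : (a c <= m)%N by rewrite /m (bigD1 c) //= leq_addr.
have E : \sum_c (xlogb R (a c) N + xlogb R (N - a c) N) =
  \sum_c xlogb R (a c) m + \sum_c (xlogb R (a c) N - xlogb R (a c) m)
  + \sum_c xlogb R (N - a c) N.
  by rewrite -big_split -big_split /=; apply: eq_bigr => c _; ring.
rewrite E -addrA lerD2l.
under eq_bigr => c _ do rewrite T1E //.
rewrite -mulr_suml -natr_sum -/m.
have S2 : \sum_c xlogb R (N - a c) N <= m%:R / L.
  rewrite /m natr_sum mulr_suml; apply: ler_sum => c _; exact: T2le.
apply: (le_trans (lerD (lexx _) S2)).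
have Lp := L_gt0.
case: (posnP m) => [->|m0]; first by rewrite mul0r add0r mul0r divr_ge0 ?ler0n // ltW.
have N0 : (0 < N)%N.
  case: (posnP N) => // N0; exfalso.
  move: m0; rewrite /m big1 // => c _; apply/eqP; rewrite -leqn0 -N0; exact: aN.
have := @lnle N m m0 N0.
rewrite mulrA -mulrDl => H.
by rewrite ler_pM2r ?invr_gt0.
Qed.
End PerCtx.
Section Comb.
Variable Sigma : finType.
Implicit Types (T : trie Sigma).

Lemma count_filter_enum (p : pred Sigma) c :
  count_mem c [seq x <- enum Sigma | p x] = p c.
Proof.
rewrite count_uniq_mem; last exact: (filter_uniq _ (enum_uniq _)).
by rewrite mem_filter mem_enum andbT.
Qed.

Lemma count_cover T k w c : count_mem c (cover T k w) = n_wc T k w c.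
Proof.
rewrite /cover count_flatten -map_comp.
rewrite (eq_map (fun u => count_filter_enum (out_has T u) c)).
rewrite sumn_count count_filter /n_wc; apply: eq_count => u /=.
by rewrite andbC.
Qed.

Lemma size_sum_count (s : seq Sigma) : size s = (\sum_c count_mem c s)%N.
Proof.
elim: s => [|x s IH] /=; first by rewrite big1.
rewrite big_split /= -IH -add1n; congr (_ + _)%N.
rewrite (bigD1 x) //= eqxx big1 // => c /negbTE.
by rewrite eq_sym => ->.
Qed.

Lemma size_cover T k w : size (cover T k w) = (\sum_c n_wc T k w c)%N.
Proof.
by rewrite size_sum_count; apply: eq_bigr => c _; rewrite count_cover.
Qed.

Lemma nwc_le T k w c : (n_wc T k w c <= n_w T k w)%N.
Proof. by apply: sub_count => u /andP[]. Qed.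

Lemma count_sum (A : Type) (a : pred A) (s : seq A) : count a s = (\sum_(u <- s) a u)%N.
Proof. by rewrite -sumn_count sumnE big_map. Qed.

Lemma sum_nw T k : (\sum_(w <- contexts T k) n_w T k w)%N = size (nodes T).
Proof.
rewrite /n_w.
under eq_bigr => w _ do rewrite count_sum.
rewrite exchange_big /= -sum1_size; apply: eq_big_seq => u uin.
rewrite -count_sum (eq_count (a2 := pred1 (ctx k u))); last by move=> w /=; rewrite eq_sym.
rewrite count_uniq_mem ?undup_uniq // mem_undup map_f //.
Qed.
End Comb.

Lemma xlogb0 (R : realType) b : xlogb R 0 b = 0.
Proof. by rewrite /xlogb eqxx. Qed.

Lemma SwE (R : realType) (Sigma : finType) (X : seq Sigma) :
  (size X)%:R * H0 R X = \sum_c xlogb R (count_mem c X) (size X).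
Proof.
rewrite /H0; have [X0|X0] := eqVneq (size X) 0%N.
  have XE : X = [::] by apply/eqP; rewrite -size_eq0 X0.
  by rewrite XE /= mulr0 big1 // => c _; rewrite xlogb0.
rewrite mulr_sumr; apply: eq_bigr => c _.
rewrite mulrCA divff ?mulr1 //.
by rewrite pnatr_eq0.
Qed.

Theorem corollary3 (R : realType) (Sigma : finType) (T : trie Sigma) (k : nat) :
  (size (nodes T))%:R * Hk R T k
  <= ((size (nodes T)).-1)%:R * Hlabel R T k + (1443%:R / 1000%:R) * (size (nodes T))%:R.
Proof.
set n := size (nodes T).
have n0 : (0 < n)%N.
  rewrite lt0n size_eq0; apply/eqP => E; have := root_in T; by rewrite E.
have nR : (n%:R : R) != 0 by rewrite pnatr_eq0 -lt0n.
set S := \sum_(w <- contexts T k) (size (cover T k w))%:R * H0 R (cover T k w).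
have HlE : (n.-1)%:R * Hlabel R T k = S.
  rewrite /Hlabel -/n -/S.
  case: (posnP n.-1) => [n1|n1]; last by rewrite mulrC divfK // pnatr_eq0 -lt0n.
  have E : nodes T = [:: [::]].
    move: n1 (root_in T); rewrite /n; case: (nodes T) => [|x [|y s]] //= _.
    by rewrite inE => /eqP ->.
  rewrite n1 mul0r /S big1 // => w _.
  rewrite size_cover big1 ?mul0r // => c _.
  by rewrite /n_wc /out_has E /= inE /= andbF.
have HkE : n%:R * Hk R T k = \sum_(w <- contexts T k) \sum_c
    (xlogb R (n_wc T k w c) (n_w T k w) + xlogb R (n_w T k w - n_wc T k w c) (n_w T k w)).
  rewrite /Hk -/n mulr_sumr; apply: eq_bigr => w _.
  rewrite mulr_sumr; apply: eq_bigr => c _.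
  by field.
rewrite HkE HlE.
have L0 := L_gt0 R.
have step : \sum_(w <- contexts T k) \sum_c
    (xlogb R (n_wc T k w c) (n_w T k w) + xlogb R (n_w T k w - n_wc T k w c) (n_w T k w))
  <= \sum_(w <- contexts T k) ((size (cover T k w))%:R * H0 R (cover T k w)
       + (n_w T k w)%:R / ln 2).
  apply: ler_sum => w _.
  rewrite SwE size_cover.
  under [X in _ <= X + _]eq_bigr => c _ do rewrite count_cover.
  by apply: per_ctx => c; exact: nwc_le.
apply: (le_trans step).
rewrite big_split /= -/S lerD2l -mulr_suml -natr_sum sum_nw -/n.
have l2 := ln2_ge R.
have iL : (ln 2 : R)^-1 <= 1443%:R / 1000%:R.
  by rewrite -[_^-1]mul1r ler_pdivrMr //; lra.
by rewrite [X in _ <= X]mulrC ler_wpM2l ?ler0n.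
Qed.
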